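(* Let $\Gamma$ be a finite dynamic game with ordinal preferences and perfect recall, let $R\subseteq S$ be a restriction and $i\in I$. Then $$\mathbb U_i(R)=\bigcup_{u_i\in\mathcal U_i}\mathbb M_i(R)[u_i].$$
   Context: A finite dynamic game with ordinal preferences and perfect recall $\Gamma$ consists of: a finite set of players $I$; a finite rooted tree of histories (finite sequences of action profiles, simultaneous moves allowed) with terminal histories $Z$; for each $i$ a partition $H_i$ of the non-terminal histories where $i$ is active (at least two actions) into information sets with identical available actions; perfect recall; complete transitive preferences $\succsim_i$ on $Z$ (asymmetric part $\succ_i$). Strategies of $i$ are equivalence classes of behaviorally equivalent standard strategies (action assignments to $H_i$, identified when they allow the same information sets and prescribe the same actions there); $S_i$ is the finite set of strategies, $S=\prod_jS_j$, $S_{-i}=\prod_{j\ne i}S_j$, $\zeta:S\to Z$ the outcome map. For $h\in H_i$, $S_i(h)$, $S_{-i}(h)$ are strategies of $i$, resp. profiles of others, reaching $h$; $H_i(s_i)=\{h\in H_i:s_i\in S_i(h)\}$. A restriction is a nonempty $R=\prod_jR_j\subseteq S$; $R_i(h)=R_i\cap S_i(h)$, $R_{-i}(h)=R_{-i}\cap S_{-i}(h)$, $R^i(h)=R_i(h)\times R_{-i}(h)$. For $P=P_i\times P_{-i}$ ($P_{-i}\subseteq S_{-i}$ not necessarily a product), $s_i\in P_i$ is weakly dominated relative to $P$ by $t_i\in P_i$ if $\zeta(t_i,s_{-i})\succsim_i\zeta(s_i,s_{-i})$ for all $s_{-i}\in P_{-i}$ with $\succ_i$ for some; B-dominated w.r.t.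 $P$ if for every nonempty $Q_{-i}\subseteq P_{-i}$ it is weakly dominated relative to $P_i\times Q_{-i}$ by some strategy in $P_i$. $s_i\in R_i$ is conditionally B-dominated w.r.t. $R$ if some $h\in H_i(s_i)$ has $R^i(h)\ne\emptyset$ and $s_i$ B-dominated w.r.t. $R^i(h)$. $\mathbb U_i(R)$ is the set of $s_i\in R_i$ not conditionally B-dominated w.r.t. $R$. $\mathcal U_i$ is the set of $u_i:Z\to\mathbb R$ with $u_i(z)\ge u_i(z')\iff z\succsim_iz'$. Given $u_i$, $s_i\in P_i$ is strictly dominated relative to $P=P_i\times P_{-i}$ by a mixed strategy if there is a probability distribution $\sigma$ on $P_i$ with $\sum_{t_i\in P_i}\sigma(t_i)u_i(\zeta(t_i,s_{-i}))>u_i(\zeta(s_i,s_{-i}))$ for every $s_{-i}\in P_{-i}$. $\mathbb M_i(R)[u_i]$ is the set of $s_i\in R_i$ such that for every $h\in H_i(s_i)$ with $R^i(h)\ne\emptyset$, $s_i$ is not strictly dominated relative to $R^i(h)$ by a mixed strategy given $u_i$. *)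

(* Defs.v *)
From HB Require Import structures.
From mathcomp Require Import all_boot all_order all_algebra.
From mathcomp Require Import reals.

Set Implicit Arguments.
Unset Strict Implicit.
Unset Printing Implicit Defensive.

Import Order.TTheory GRing.Theory Num.Theory.
Local Open Scope ring_scope.

(* Histories are finite sequences of action profiles
   [{ffun player -> action}]; [hist] lists the histories of the tree;
   [feas h j] is the set A_j(h) of feasible actions of j at h (the feasible
   profiles at h form the product of these sets); [infosets i] is the
   collection H_i of information sets of i (sets of histories);
   [pref i] is the weak preference of i on terminal histories. *)
Record game := Game {
  player : finType;
  action : finType;
  hist : seq (seq {ffun player -> action});
  feas : seq {ffun player -> action} -> player -> {set action};
  infosets : player -> {set {set seq_sub hist}};
  pref : player -> rel (seq {ffun player -> action})
}.

Section Game.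
Variable G : game.
Local Notation I := (player G).
Local Notation A := (action G).

Definition Prof := {ffun I -> A}.
Definition Hist := seq Prof.
Definition Node := seq_sub (hist G).

Definition is_hist (h : Hist) : bool := h \in hist G.
Definition nonterm (h : Hist) : bool := is_hist h && [forall j, @feas G h j != set0].
Definition term (h : Hist) : bool := is_hist h && [forall j, @feas G h j == set0].
Definition active (i : I) (h : Hist) : bool := is_hist h && (1 < #|@feas G h i|)%N.

(* the information set of i containing h (set0 if none) *)
Definition blk (i : I) (h : Hist) : {set Node} :=
  match (insub h : option Node) with
  | Some n => pblock (@infosets G i) n
  | None => set0
  end.

Definition steps (h : Hist) : seq (Hist * Prof) :=
  pmap (fun k => if drop k h is a :: _ then Some (take k h, a) else None)
       (iota 0 (size h)).

Definition experience (i : I) (h : Hist) : seq ({set Node} * A) :=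
  [seq (blk i p.1, (p.2 : Prof) i) | p : Hist * Prof <- steps h & active i p.1].

Definition spref (i : I) (z z' : Hist) : bool := @pref G i z z' && ~~ @pref G i z' z.

Record valid_game : Prop := {
  vg_root : is_hist [::];
  vg_prefix : forall (h : Hist) (a : Prof), is_hist (rcons h a) ->
                is_hist h /\ forall j, a j \in @feas G h j;
  vg_children : forall (h : Hist) (a : Prof), nonterm h -> (forall j, a j \in @feas G h j) ->
                is_hist (rcons h a);
  vg_term : forall h, is_hist h -> nonterm h \/ term h;
  vg_partition : forall i, partition (@infosets G i) [set n : Node | active i (val n)];
  vg_same_actions : forall i X, X \in @infosets G i -> forall x y, x \in X -> y \in X ->
                @feas G (val x) i = @feas G (val y) i;
  vg_perfect_recall : forall i X, X \in @infosets G i -> forall x y, x \in X -> y \in X ->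
                experience i (val x) = experience i (val y);
  vg_complete : forall i z z', term z -> term z' -> @pref G i z z' || @pref G i z' z;
  vg_transitive : forall i z1 z2 z3, term z1 -> term z2 -> term z3 ->
                @pref G i z1 z2 -> @pref G i z2 z3 -> @pref G i z1 z3
}.

(* standard strategies: action assignments to information sets
   (values outside H_i are irrelevant and identified by [equivS]) *)
Definition Std := {ffun {set Node} -> A}.
(* strategies = equivalence classes of standard strategies *)
Definition Str := {set Std}.

Definition legal (i : I) (s : Std) : bool :=
  [forall X in @infosets G i, [forall x in X, s X \in @feas G (val x) i]].

Definition allows (i : I) (s : Std) (h : Hist) : bool :=
  all (fun p : Hist * Prof => active i p.1 ==> (s (blk i p.1) == (p.2 : Prof) i)) (steps h).

Definition allowsI (i : I) (s : Std) (X : {set Node}) : bool :=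
  [exists x in X, allows i s (val x)].

Definition equivS (i : I) (s t : Std) : bool :=
  [forall X in @infosets G i,
     (allowsI i s X == allowsI i t X) && (allowsI i s X ==> (s X == t X))].

Definition cls (i : I) (s : Std) : Str := [set t | legal i t & equivS i s t].

Definition Sset (i : I) : {set Str} := [set cls i s | s in [set s | legal i s]].

(* play induced by a profile of standard strategies; inactive players play
   their unique feasible action *)
Definition act (σ : I -> Std) (h : Hist) (j : I) : A :=
  if active j h then σ j (blk j h) else odflt (σ j set0) [pick a in @feas G h j].

Definition step (σ : I -> Std) (h : Hist) : Hist :=
  if nonterm h then rcons h [ffun j => act σ h j] else h.

Definition play (σ : I -> Std) : Hist := iter (size (hist G)) (step σ) [::].

(* outcome map zeta : S -> Z (computed on representatives) *)
Definition zeta (c : I -> Str) : Hist :=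
  if [pick σ : {ffun I -> Std} | [forall j, σ j \in c j]] is Some σ
  then play σ else [::].

Definition Opp (i : I) := {ffun {j : I | j != i} -> Str}.

Definition full (i : I) (c : Str) (o : Opp i) : I -> Str :=
  fun j => match (insub j : option {j : I | j != i}) with
           | Some k => o k
           | None => c
           end.

Definition reachI (i : I) (c : Str) (X : {set Node}) : bool :=
  [exists s in c, allowsI i s X].

Definition reachO (i : I) (o : Opp i) (X : {set Node}) : bool :=
  [exists x in X, [forall k, [exists s in o k, allows (val k) s (val x)]]].

Definition restriction (Rs : I -> {set Str}) : Prop :=
  forall j, Rs j != set0 /\ Rs j \subset Sset j.

Definition RiH (i : I) (Rs : I -> {set Str}) (X : {set Node}) : {set Str} :=
  [set c in Rs i | reachI i c X].
Definition RoH (i : I) (Rs : I -> {set Str}) (X : {set Node}) : {set Opp i} :=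
  [set o : Opp i | [forall k, o k \in Rs (val k)] && reachO o X].

Definition wdom (i : I) (Pi : {set Str}) (Po : {set Opp i}) (s t : Str) : Prop :=
  [/\ s \in Pi, t \in Pi,
      (forall o, o \in Po -> @pref G i (zeta (full t o)) (zeta (full s o))) &
      (exists2 o, o \in Po & spref i (zeta (full t o)) (zeta (full s o)))].

Definition Bdom (i : I) (Pi : {set Str}) (Po : {set Opp i}) (s : Str) : Prop :=
  s \in Pi /\ forall Q : {set Opp i}, Q != set0 -> Q \subset Po ->
    exists t, wdom Pi Q s t.

Definition condBdom (i : I) (Rs : I -> {set Str}) (s : Str) : Prop :=
  s \in Rs i /\ exists X, [/\ X \in @infosets G i, reachI i s X,
     RiH i Rs X != set0, RoH i Rs X != set0 & Bdom (RiH i Rs X) (RoH i Rs X) s].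

Definition Uset (i : I) (Rs : I -> {set Str}) (s : Str) : Prop :=
  s \in Rs i /\ ~ condBdom i Rs s.

Definition urep (RR : realType) (i : I) (u : Hist -> RR) : Prop :=
  forall z z', term z -> term z' -> (u z' <= u z <-> @pref G i z z').

Definition sdomM (RR : realType) (u : Hist -> RR) (i : I)
    (Pi : {set Str}) (Po : {set Opp i}) (s : Str) : Prop :=
  s \in Pi /\ exists σ : Str -> RR,
   [/\ forall t, t \in Pi -> 0 <= σ t, \sum_(t in Pi) σ t = 1 &
       forall o, o \in Po -> u (zeta (full s o)) < \sum_(t in Pi) σ t * u (zeta (full t o))].

Definition Mset (RR : realType) (i : I) (Rs : I -> {set Str}) (u : Hist -> RR)
    (s : Str) : Prop :=
  s \in Rs i /\ forall X, X \in @infosets G i -> reachI i s X ->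
    RiH i Rs X != set0 -> RoH i Rs X != set0 ->
    ~ sdomM u (RiH i Rs X) (RoH i Rs X) s.

End Game.

(* Main.v *)
Require Import Defs.
From HB Require Import structures.
From mathcomp Require Import all_boot all_order all_algebra.
From mathcomp Require Import reals zify ring lra.
From Stdlib Require Import Lia.
Set Implicit Arguments.
Unset Strict Implicit.
Unset Printing Implicit Defensive.
Import Order.TTheory GRing.Theory Num.Theory.

Module M_Part1.

Section Play.
Variable G : game.
Hypothesis vG : valid_game G.
Variable σ : player G -> Std G.
Hypothesis leg : forall j, legal j (σ j).

Lemma act_feas h j : nonterm h -> act σ h j \in @feas G h j.
Proof.
move=> nt; rewrite /act; case: ifP => Hact.
  move: (Hact) => /andP[hh _].
  rewrite /blk; case: insubP => [n _ Hn|]; last by move/negP => Hn; exfalso; apply: Hn; exact: hh.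
  have Hpart := vg_partition vG j.
  move: Hpart => /and3P[/eqP Hcov _ _].
  have ncov : n \in cover (@infosets G j) by rewrite Hcov inE Hn.
  have Pm := pblock_mem ncov.
  move: (leg j) => /forall_inP /(_ _ Pm) /forall_inP.
  by move=> /(_ n); rewrite mem_pblock ncov Hn => ->.
move: nt => /andP[_ /forallP /(_ j) /set0Pn [a Ha]].
by case: pickP => [b Hb|/(_ a)]; rewrite ?Ha.
Qed.

Lemma step_hist h : is_hist h -> is_hist (step σ h).
Proof.
move=> hh; rewrite /step; case: ifP => nt //.
apply: (vg_children vG) => // j; rewrite ffunE; exact: act_feas.
Qed.

Definition hk k := iter k (step σ) [::].

Lemma hk_hist k : is_hist (hk k).
Proof. elim: k => [|k IH]; first exact: vg_root vG. exact: step_hist. Qed.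

Lemma hk_nonterm m : nonterm (hk m) -> forall k, k <= m -> nonterm (hk k).
Proof.
elim: m => [|m IH] H k.
  by rewrite leqn0 => /eqP ->.
rewrite leq_eqVlt => /orP[/eqP -> //|].
rewrite ltnS; apply: IH.
move: H; rewrite /hk iterS /step; case: ifP => //.
by move=> ->.
Qed.

Lemma hk_size k : (forall j, j < k -> nonterm (hk j)) -> size (hk k) = k.
Proof.
elim: k => [//|k IH] H.
rewrite /hk iterS /step.
have nt := H k (ltnSn k).
rewrite -/(hk k) nt size_rcons IH // => j jk; apply: H; exact: ltnW.
Qed.

Lemma play_term : term (play σ).
Proof.
have hh := hk_hist (size (hist G)).
case: (vg_term vG hh) => [nt|]; last by [].
exfalso.
set N := size (hist G).
have sz : forall k, k <= N -> size (hk k) = k.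
  move=> k kN; apply: hk_size => j jk; apply: (hk_nonterm nt).
  exact: leq_trans (ltnW jk) kN.
have U : uniq [seq hk k | k <- iota 0 N.+1].
  rewrite map_inj_in_uniq ?iota_uniq //.
  move=> a b; rewrite !mem_iota !add0n !ltnS => aN bN E.
  by rewrite -(sz _ aN) -(sz _ bN) E.
have := uniq_leq_size U.
rewrite size_map size_iota => /(_ (hist G)) H.
suff : N < N by rewrite ltnn.
apply: H => x /mapP [k _ ->]; exact: hk_hist.
Qed.
End Play.

Lemma zeta_term G (c : player G -> Str G) :
  valid_game G -> (forall j, c j \in Sset j) -> term (zeta c).
Proof.
move=> vG Hc; rewrite /zeta.
have Hin : forall j, exists2 s, legal j s & c j = cls j s.
  move=> j; move: (Hc j) => /imsetP [s]; rewrite inE => Hs ->.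
  by exists s.
case: pickP => [σ Hσ|H].
  apply: play_term => // j.
  move: Hσ => /forallP /(_ j).
  by case: (Hin j) => s _ ->; rewrite inE => /andP[].
exfalso.
have Hex : forall j, exists s, s \in c j.
  move=> j; case: (Hin j) => s Hs ->; exists s.
  rewrite inE Hs /=; apply/forall_inP => X _.
  by rewrite eqxx eqxx implybT.
move: (H [ffun j => xchoose (Hex j)]) => /negP; apply.
apply/forallP => j; rewrite ffunE; exact: xchooseP.
Qed.

End M_Part1.
Import M_Part1.

Module M_Part2.

Lemma count_lt (T : eqType) (p q : pred T) (s : seq T) x :
  subpred p q -> x \in s -> q x -> ~~ p x -> count p s < count q s.
Proof.
move=> pq; elim: s => [//|y s IH]; rewrite inE => /orP[/eqP <-|xs] qx px /=.
  rewrite qx (negbTE px) add0n add1n ltnS; exact: sub_count.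
rewrite -addnS; apply: leq_add; last exact: IH.
by case: (p y) (pq y) => // ->.
Qed.

Section Rank.
Variable G : game.
Hypothesis vG : valid_game G.
Variable i : player G.

Definition rk (z : Hist G) : nat := count (fun w => term w && pref i z w) (hist G).

Lemma rk_le z : rk z <= size (hist G).
Proof. exact: count_size. Qed.

Lemma pref_refl z : term z -> pref i z z.
Proof. by move=> tz; have := vg_complete vG i tz tz; rewrite orbb. Qed.

Lemma rk_pref z z' : term z -> term z' -> pref i z z' = (rk z' <= rk z).
Proof.
move=> tz tz'; apply/idP/idP.
  move=> pzz'; apply: sub_count => w /andP[tw pw]; rewrite tw /=.
  exact: (vg_transitive vG tz tz' tw pzz' pw).
apply: contraLR => npz.
have pz'z : pref i z' z by have := vg_complete vG i tz tz'; rewrite (negbTE npz).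
rewrite -ltnNge; apply: (@count_lt _ _ _ _ z').
- move=> w /andP[tw pw]; rewrite tw /=; exact: (vg_transitive vG tz' tz tw pz'z pw).
- by move: tz' => /andP[].
- by rewrite tz' pref_refl.
- by rewrite negb_and npz orbT.
Qed.

Variable RR : realType.
Definition KK := #|Opp i|.+2.
Definition uu (z : Hist G) : RR := (- ((KK ^ (size (hist G) - rk z))%:R))%R.

Lemma uu_le z z' : (uu z' <= uu z)%R = (rk z' <= rk z).
Proof.
rewrite /uu lerN2 ler_nat leq_exp2l // .
have := rk_le z; have := rk_le z'; lia.
Qed.

Lemma uu_le0 z : (uu z <= 0)%R.
Proof. by rewrite /uu oppr_le0 ler0n. Qed.

Lemma uu_gap z z' : (rk z < rk z')%N ->
  ((KK%:R : RR) * - uu z' <= - uu z)%R.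
Proof.
move=> H; rewrite /uu !opprK -natrM ler_nat -expnS leq_exp2l //.
have := rk_le z'; have := rk_le z; lia.
Qed.

Lemma urep_uu : urep i uu.
Proof. by move=> z z' tz tz'; rewrite uu_le rk_pref. Qed.
End Rank.

Lemma uu_eq G (i : player G) RR (z z' : Hist G) : rk i z = rk i z' -> uu i RR z = uu i RR z'.
Proof. by rewrite /uu => ->. Qed.

Lemma uu_lt0 G (i : player G) RR (z : Hist G) : (uu i RR z < 0)%R.
Proof. by rewrite /uu oppr_lt0 ltr0n expn_gt0. Qed.

End M_Part2.
Import M_Part2.

Module M_Part3.
Local Open Scope ring_scope.


Lemma ind_sum (T : finType) (RR : numDomainType) (P : {set T}) t (f : T -> RR) :
  t \in P -> \sum_(x in P) (x == t)%:R * f x = f t.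
Proof.
move=> tP; rewrite (bigD1 t) //= eqxx mul1r big1 ?addr0 // => x /andP[_ /negbTE ->].
by rewrite mul0r.
Qed.

Lemma L1 G (RR : realType) (i : player G) (u : Hist G -> RR) (Pi : {set Str G}) (Po : {set Opp i}) (s : Str G) :
  urep i u -> (forall t o, t \in Pi -> o \in Po -> term (zeta (full t o))) ->
  Bdom Pi Po s -> sdomM u Pi Po s.
Proof.
move=> Hu Ht [sPi HB]; split => //.
pose F (t : Str G) (o : Opp i) := u (zeta (full t o)).
suff: forall n (Q : {set Opp i}), (#|Q| <= n)%N -> Q \subset Po -> exists σ : Str G -> RR,
  [/\ forall t, t \in Pi -> 0 <= σ t, \sum_(t in Pi) σ t = 1 &
      forall o, o \in Q -> F s o < \sum_(t in Pi) σ t * F t o].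
  by move=> /(_ #|Po| Po (leqnn _) (subxx _)) [σ [h1 h2 h3]]; exists σ; split.
have base : forall Q : {set Opp i}, Q = set0 -> exists σ : Str G -> RR,
  [/\ forall t, t \in Pi -> 0 <= σ t, \sum_(t in Pi) σ t = 1 &
      forall o, o \in Q -> F s o < \sum_(t in Pi) σ t * F t o].
  move=> Q ->; exists (fun x => (x == s)%:R); split => //; last by move=> o; rewrite inE.
  have := ind_sum (fun _ => 1 : RR) sPi.
  by under eq_bigr do rewrite mulr1.
elim => [|n IH] Q.
  by rewrite leqn0 cards_eq0 => /eqP -> _; apply: base.
case: (eqVneq Q set0) => [-> _ _|Qn0 cQ sQ]; first exact: base.
have [t [_ tPi Hle [o0 o0Q Hs]]] := HB Q Qn0 sQ.
set Q' := [set o in Q | pref i (zeta (full s o)) (zeta (full t o))].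
have sQ'Q : Q' \subset Q by apply/subsetP => o; rewrite inE => /andP[].
have sub' : Q' \subset Po by exact: subset_trans sQ.
have o0Q' : o0 \notin Q'.
  by rewrite inE o0Q /=; move: Hs => /andP[_].
have card' : (#|Q'| <= n)%N.
  have : Q' \proper Q by apply/properP; split => //; exists o0.
  by move=> /proper_card h; rewrite -ltnS (leq_trans h cQ).
have [σ' [σ'0 σ'1 σ'd]] := IH Q' card' sub'.
have tm : forall x o, x \in Pi -> o \in Q -> term (zeta (full x o)).
  by move=> x o xP oQ; apply: Ht => //; exact: (subsetP sQ).
have gle : forall o, o \in Q -> F s o <= F t o.
  by move=> o oQ; apply/(Hu _ _ (tm _ _ tPi oQ) (tm _ _ sPi oQ)); apply: Hle.
have glt : forall o, o \in Q -> o \notin Q' -> F s o < F t o.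
  move=> o oQ oQ'; rewrite ltNge; apply/negP => H.
  move: oQ'; rewrite inE oQ /=; apply/negP/negPn.
  exact: (Hu _ _ (tm _ _ sPi oQ) (tm _ _ tPi oQ)).1.
have geq : forall o, o \in Q' -> F t o = F s o.
  move=> o; rewrite inE => /andP[oQ p]; apply/le_anti; rewrite gle // andbT.
  exact: (Hu _ _ (tm _ _ sPi oQ) (tm _ _ tPi oQ)).2.
pose S o := \sum_(x in Pi) σ' x * F x o.
pose g o := F t o - F s o.
pose l o := F s o - S o.
pose N := \sum_(o in Q) `|l o| / g o.
have gge : forall o, o \in Q -> 0 <= g o by move=> o oQ; rewrite subr_ge0 gle.
have N0 : 0 <= N by apply: sumr_ge0 => o oQ; rewrite divr_ge0 ?gge.
have Nle : forall o, o \in Q -> `|l o| / g o <= N.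
  move=> o oQ; rewrite /N (bigD1 o) //= lerDl.
  by apply: sumr_ge0 => x /andP[xQ _]; rewrite divr_ge0 ?gge.
pose e := (N + 2)^-1.
have eN : e * (N + 2) = 1 by rewrite mulVf // gt_eqF //; lra.
have e0 : 0 < e by rewrite invr_gt0; lra.
have e1 : e <= 1 by nra.
exists (fun x => (1 - e) * (x == t)%:R + e * σ' x); split.
- move=> x xP; apply: addr_ge0; last by rewrite mulr_ge0 ?σ'0 // ltW.
  by rewrite mulr_ge0 // subr_ge0.
- rewrite big_split /= -!mulr_sumr σ'1.
  have := ind_sum (fun _ => 1 : RR) tPi.
  under eq_bigr do rewrite mulr1.
  move=> ->; ring.
- move=> o oQ.
  have -> : \sum_(x in Pi) ((1 - e) * (x == t)%:R + e * σ' x) * F x o =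
            (1 - e) * F t o + e * S o.
    under eq_bigr do rewrite mulrDl -!mulrA.
    by rewrite big_split /= -!mulr_sumr ind_sum.
  case: (boolP (o \in Q')) => oQ'.
    have := σ'd o oQ'; rewrite -/(S o) (geq o oQ') => h; nra.
  have gp : 0 < g o by rewrite subr_gt0 glt.
  have hl : l o <= N * g o.
    apply: le_trans (ler_norm _) _.
    by rewrite -ler_pdivrMr // Nle.
  rewrite /g /l in gp hl; nra.
Qed.

End M_Part3.
Import M_Part3.

Module M_Part4.
Local Open Scope ring_scope.


Lemma L2 G (RR : realType) (i : player G) (Pi : {set Str G}) (Po : {set Opp i}) (s : Str G) :
  valid_game G -> (forall t o, t \in Pi -> o \in Po -> term (zeta (full t o))) ->
  sdomM (uu i RR) Pi Po s -> Bdom Pi Po s.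
Proof.
move=> vG Ht [sPi [σ [σ0 σ1 σd]]]; split => // Q Qn0 sQ.
pose N := size (hist G).
pose K := KK i.
pose f (t : Str G) (o : Opp i) := zeta (full t o).
pose F t o := uu i RR (f t o).
have Fle : forall x o, F x o <= 0 by move=> x o; exact: uu_le0.
have Flt : forall o, F s o < 0 by move=> o; exact: uu_lt0.
have Fgap : forall x o, (rk i (f x o) < rk i (f s o))%N -> K%:R * - F s o <= - F x o.
  by move=> x o H; exact: uu_gap.
have Feq : forall x o, rk i (f x o) = rk i (f s o) -> F x o = F s o.
  by move=> x o H; exact: uu_eq.
have {}σd : forall o, o \in Po -> F s o < \sum_(t in Pi) σ t * F t o by [].
clearbody F.
pose T x o := (F x o - F s o) / - F s o.
pose V x := \sum_(o in Q) T x o.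
have bp : forall o, 0 < - F s o by move=> o; rewrite oppr_gt0.
have T1 : forall x o, T x o <= 1.
  move=> x o; rewrite /T (ler_pdivrMr _ _ (bp o)) mul1r.
  have := Fle x o; lra.
have T2 : forall x o, (rk i (f x o) < rk i (f s o))%N -> T x o <= 1 - K%:R.
  move=> x o H; rewrite /T (ler_pdivrMr _ _ (bp o)).
  have Hab := Fgap x o H.
  rewrite mulrBl mul1r; lra.
have T0 : forall x o, rk i (f x o) = rk i (f s o) -> T x o = 0.
  by move=> x o H; rewrite /T (Feq _ _ H) subrr mul0r.
have Wpos : 0 < \sum_(x in Pi) σ x * V x.
  under eq_bigr do rewrite /V mulr_sumr.
  rewrite exchange_big /=.
  have inner : forall o, o \in Q -> 0 < \sum_(x in Pi) σ x * T x o.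
    move=> o oQ.
    have -> : \sum_(x in Pi) σ x * T x o = (\sum_(x in Pi) σ x * F x o - F s o) / - F s o.
      under eq_bigr do rewrite /T mulrA mulrBr.
      rewrite -mulr_suml sumrB -mulr_suml σ1 mul1r //.
    by rewrite divr_gt0 ?bp // subr_gt0 σd // (subsetP sQ).
  have [o0 o0Q] := set0Pn _ Qn0.
  rewrite (bigD1 o0) //= ltr_pwDl ?inner //.
  apply: sumr_ge0 => o /andP[oQ _]; exact: ltW (inner o oQ).
have [t tPi Vt] : exists2 t, t \in Pi & 0 < V t.
  case: (boolP [exists x in Pi, 0 < V x]) => [/exists_inP [t tP Vt]|H].
    by exists t.
  exfalso; move: Wpos; apply/negP; rewrite -leNgt.
  apply: sumr_le0 => x xP; apply: mulr_ge0_le0; first exact: σ0.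
  rewrite leNgt; apply/negP => Hx; move: H => /negP; apply.
  by apply/exists_inP; exists x.
have tm : forall x o, x \in Pi -> o \in Q -> term (f x o).
  by move=> x o xP oQ; apply: Ht => //; exact: (subsetP sQ).
have A : forall o, o \in Q -> (rk i (f s o) <= rk i (f t o))%N.
  move=> o1 o1Q; rewrite leqNgt; apply/negP => H.
  move: Vt; apply/negP; rewrite -leNgt /V (bigD1 o1) //=.
  have H2 : \sum_(o | (o \in Q) && (o != o1)) T t o <= #|Opp i|%:R.
    apply: le_trans (_ : \sum_(o : Opp i) 1 <= _); last by rewrite sumr_const.
    rewrite [X in _ <= X](bigID (fun o => (o \in Q) && (o != o1))) /=.
    rewrite -[X in X <= _]addr0; apply: lerD; first exact: ler_sum.
    by apply: sumr_ge0.
  have := T2 t o1 H; rewrite /K /KK; move: H2; rewrite -!natr1.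
  lra.
have pr : forall o, o \in Q -> pref i (f t o) (f s o) = (rk i (f s o) <= rk i (f t o))%N.
  by move=> o oQ; rewrite (rk_pref vG i (tm t o tPi oQ) (tm s o sPi oQ)).
have pr' : forall o, o \in Q -> pref i (f s o) (f t o) = (rk i (f t o) <= rk i (f s o))%N.
  by move=> o oQ; rewrite (rk_pref vG i (tm s o sPi oQ) (tm t o tPi oQ)).
exists t; split => //.
  by move=> o oQ; rewrite -/(f t o) -/(f s o) pr // A.
case: (boolP [exists o in Q, (rk i (f s o) < rk i (f t o))%N]) => [/exists_inP [o oQ H]|H].
  exists o => //; rewrite /spref -/(f t o) -/(f s o) pr // pr' // (ltnW H) /=.
  by rewrite -ltnNge.
exfalso; move: Vt; apply/negP; rewrite -leNgt /V big1 // => o oQ.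
apply: T0; apply/eqP; rewrite eqn_leq A // andbT leqNgt.
by apply/negP => Hl; move: H => /negP; apply; apply/exists_inP; exists o.
Qed.

End M_Part4.
Import M_Part4.

Theorem lemma5 (G : game) (RR : realType) (Rs : player G -> {set Str G})
    (i : player G) :
  valid_game G -> restriction Rs ->
  forall s : Str G,
    Uset i Rs s <-> exists u : Hist G -> RR, urep i u /\ Mset i Rs u s.
Proof.
move=> vG Hr s.
have Hterm : forall X t o, t \in RiH i Rs X -> o \in RoH i Rs X -> term (zeta (full t o)).
  move=> X t o; rewrite !inE => /andP[tR _] /andP[/forallP Ho _].
  apply: zeta_term vG _ => j; rewrite /full; case: insubP => [k _ Hk|].
    rewrite -Hk; apply: (subsetP (Hr (val k)).2); exact: Ho k.
  by move=> /negPn /eqP ->; exact: (subsetP (Hr i).2).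
split.
  move=> [sR nC]; exists (uu i RR); split; first exact: urep_uu vG i RR.
  split => // X XI rX n1 n2 Hsd; apply: nC; split => //; exists X; split => //.
  exact: (L2 vG (Hterm X) Hsd).
move=> [u [Hu [sR HM]]]; split => // [[_ [X [XI rX n1 n2 HB]]]].
exact: (HM X XI rX n1 n2 (L1 Hu (Hterm X) HB)).
Qed.
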